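(* Let $n\ge2$. Let $a,b>0$ and let $f:[-a,b]\to[0,\infty)$ be continuous, strictly positive on $(-a,b)$, such that $h:=f^{1/(n-1)}$ is concave on $[-a,b]$ and $\int_{-a}^b t f(t)\,dt=0$. Then $$\frac{\int_0^b f(t)\,dt}{\int_{-a}^0 f(t)\,dt}\le\Big(1+\frac1n\Big)^n-1,$$ with equality if and only if $h$ is affine on $[-a,b]$ and $h(-a)=0$. *)

(* Defs.v *)
From Stdlib Require Import Reals.
Open Scope R_scope.

Definition continuous_on_interval (f : R -> R) (lo hi : R) : Prop :=
  forall x, lo <= x <= hi ->
    forall eps, 0 < eps -> exists delta, 0 < delta /\
      forall y, lo <= y <= hi -> Rabs (y - x) < delta -> Rabs (f y - f x) < eps.

Definition nonneg_root (k : nat) (x : R) : R :=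
  if Rle_dec x 0 then 0 else Rpower x (/ INR k).

Definition concave_on (h : R -> R) (lo hi : R) : Prop :=
  forall x y l, lo <= x <= hi -> lo <= y <= hi -> 0 <= l <= 1 ->
    l * h x + (1 - l) * h y <= h (l * x + (1 - l) * y).

Definition affine_on (h : R -> R) (lo hi : R) : Prop :=
  exists c d, forall t, lo <= t <= hi -> h t = c * t + d.

(* Main.v *)
Require Import Defs.
From Stdlib Require Import Reals Lra Lia Classical.
From Coquelicot Require Import Coquelicot.
Open Scope R_scope.
Implicit Types f g F G : R -> R.


Lemma pow_lt_strict (x y : R) (m : nat) : (1 <= m)%nat -> 0 <= x < y -> x ^ m < y ^ m.
Proof.
  intros Hm [Hx Hxy]. induction m as [|m IH]; [lia|].
  destruct m as [|m]. { simpl; lra. }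
  assert (IH' : x ^ S m < y ^ S m) by (apply IH; lia).
  simpl in *. assert (0 <= x * x ^ m) by (apply Rmult_le_pos; [lra| apply pow_le; lra]).
  apply Rle_lt_trans with (x * (y * y^m)).
  - apply Rmult_le_compat_l; lra.
  - apply Rmult_lt_compat_r; [|lra]. apply Rmult_lt_0_compat; [lra| apply pow_lt; lra].
Qed.

Lemma pow_inj_nonneg (x y : R) (m : nat) : (1 <= m)%nat -> 0 <= x -> 0 <= y -> x ^ m = y ^ m -> x = y.
Proof.
  intros Hm Hx Hy E. destruct (Rtotal_order x y) as [H|[H|H]]; auto.
  - pose proof (pow_lt_strict x y m Hm (conj Hx H)); lra.
  - pose proof (pow_lt_strict y x m Hm (conj Hy H)); lra.
Qed.

Lemma root_nonneg k x : 0 <= nonneg_root k x.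
Proof. unfold nonneg_root. destruct (Rle_dec x 0); [lra|]. unfold Rpower. left; apply exp_pos. Qed.

Lemma root_pos k x : 0 < x -> 0 < nonneg_root k x.
Proof. intros. unfold nonneg_root. destruct (Rle_dec x 0); [lra|]. unfold Rpower. apply exp_pos. Qed.

Lemma root_pow k x : (1 <= k)%nat -> 0 <= x -> (nonneg_root k x) ^ k = x.
Proof.
  intros Hk Hx. unfold nonneg_root. destruct (Rle_dec x 0).
  - assert (x = 0) by lra. subst. destruct k; [lia|]. simpl; ring.
  - assert (0 < INR k) by (apply lt_0_INR; lia).
    rewrite <- Rpower_pow by (unfold Rpower; apply exp_pos).
    rewrite Rpower_mult. rewrite Rinv_l by lra. apply Rpower_1. lra.
Qed.

Lemma root_of_pow k y : (1 <= k)%nat -> 0 <= y -> nonneg_root k (y ^ k) = y.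
Proof.
  intros Hk Hy. apply (pow_inj_nonneg _ _ k Hk); [apply root_nonneg|auto|].
  apply root_pow; auto. apply pow_le; auto.
Qed.

Definition Phi (A B : R) (m : nat) (t : R) := (A + B*t)^(S m) / (INR (S m) * B).
Definition Psi (A B : R) (m : nat) (t : R) :=
  t * (A + B*t)^(S m) / (INR (S m) * B) - (A + B*t)^(S (S m)) / (INR (S m) * INR (S (S m)) * B^2).

Lemma int_pow_lin A B m x y : B <> 0 ->
  RInt (fun t => (A + B*t)^m) x y = Phi A B m y - Phi A B m x.
Proof.
  intros HB. apply is_RInt_unique.
  apply (is_RInt_derive (Phi A B m)).
  - intros z _. unfold Phi. 
    assert (0 < INR (S m)) by (apply lt_0_INR; lia).
    auto_derive; [repeat split; auto; lra|]. simpl pred.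
    change (match m with 0%nat => 1 | S _ => INR m + 1 end) with (INR (S m)).
    field. lra.
  - intros z _. apply (ex_derive_continuous (fun t => (A+B*t)^m)). auto_derive. auto.
Qed.

Lemma int_t_pow_lin A B m x y : B <> 0 ->
  RInt (fun t => t * (A + B*t)^m) x y = Psi A B m y - Psi A B m x.
Proof.
  intros HB. apply is_RInt_unique.
  apply (is_RInt_derive (Psi A B m)).
  - intros z _. unfold Psi.
    assert (0 < INR (S m)) by (apply lt_0_INR; lia).
    assert (0 < INR (S (S m))) by (apply lt_0_INR; lia).
    auto_derive; [repeat split; auto; try lra; apply pow_nonzero; auto|]. simpl pred.
    change (match m with 0%nat => 1 | S _ => INR m + 1 end) with (INR (S m)).
    change (INR m + 1 + 1) with (INR (S m) + 1).
    field. lra.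
  - intros z _. apply (ex_derive_continuous (fun t => t*(A+B*t)^m)). auto_derive. auto.
Qed.

Lemma RI_add f g x y : ex_RInt f x y -> ex_RInt g x y ->
  RInt (fun t => f t + g t) x y = RInt f x y + RInt g x y.
Proof. intros H1 H2. exact (RInt_plus f g x y H1 H2). Qed.
Lemma RI_sub f g x y : ex_RInt f x y -> ex_RInt g x y ->
  RInt (fun t => f t - g t) x y = RInt f x y - RInt g x y.
Proof. intros H1 H2. exact (RInt_minus f g x y H1 H2). Qed.
Lemma RI_scal f c x y : ex_RInt f x y ->
  RInt (fun t => c * f t) x y = c * RInt f x y.
Proof. intros H1. exact (RInt_scal f x y c H1). Qed.
Lemma exRI_add f g x y : ex_RInt f x y -> ex_RInt g x y -> ex_RInt (fun t => f t + g t) x y.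
Proof. intros H1 H2. exact (ex_RInt_plus f g x y H1 H2). Qed.
Lemma exRI_sub f g x y : ex_RInt f x y -> ex_RInt g x y -> ex_RInt (fun t => f t - g t) x y.
Proof. intros H1 H2. exact (ex_RInt_minus f g x y H1 H2). Qed.
Lemma exRI_scal f c x y : ex_RInt f x y -> ex_RInt (fun t => c * f t) x y.
Proof. intros H1. exact (ex_RInt_scal f x y c H1). Qed.
Lemma RI_chasles f x y z : ex_RInt f x y -> ex_RInt f y z -> RInt f x y + RInt f y z = RInt f x z.
Proof. intros H1 H2. exact (RInt_Chasles f x y z H1 H2). Qed.
Lemma exRI_sub_int f x y p q : p <= x -> x <= y -> y <= q -> ex_RInt f p q -> ex_RInt f x y.
Proof.
  intros H1 H2 H3 H. apply (ex_RInt_Chasles_2 f p x y); [lra|].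
  apply (ex_RInt_Chasles_1 f p y q); [lra|auto].
Qed.

Lemma cont_sub f lo hi x y : continuous_on_interval f lo hi -> lo <= x -> y <= hi ->
  continuous_on_interval f x y.
Proof.
  intros H Hx Hy t Ht e He. destruct (H t ltac:(lra) e He) as [d [Hd Hd2]].
  exists d; split; auto. intros z Hz Hzt. apply Hd2; auto; lra.
Qed.

Lemma cont_global g x y : (forall t, continuity_pt g t) -> continuous_on_interval g x y.
Proof.
  intros Hg t Ht e He. destruct (Hg t e He) as [d [Hd Hd2]].
  exists d; split; auto. intros z Hz Hzt.
  destruct (Req_dec z t) as [->|Hne]. { rewrite Rminus_eq_0, Rabs_R0; auto. }
  apply (Hd2 z). split; [split|]; auto. exact I.
Qed.

Lemma cont_minus f g x y : continuous_on_interval f x y -> continuous_on_interval g x y ->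
  continuous_on_interval (fun t => f t - g t) x y.
Proof.
  intros Hf Hg t Ht e He.
  destruct (Hf t Ht (e/2) ltac:(lra)) as [d1 [Hd1 H1]].
  destruct (Hg t Ht (e/2) ltac:(lra)) as [d2 [Hd2 H2]].
  exists (Rmin d1 d2); split. { apply Rmin_pos; auto. }
  intros z Hz Hzt. specialize (H1 z Hz ltac:(pose proof (Rmin_l d1 d2); lra)).
  specialize (H2 z Hz ltac:(pose proof (Rmin_r d1 d2); lra)).
  revert H1 H2. unfold Rabs. repeat destruct Rcase_abs; lra.
Qed.

Lemma loc_pos g x y t0 : continuous_on_interval g x y -> x <= t0 <= y -> 0 < g t0 ->
  exists d, 0 < d /\ forall t, x <= t <= y -> Rabs (t - t0) < d -> g t0 / 2 < g t.
Proof.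
  intros Hg Ht Hp. destruct (Hg t0 Ht (g t0 / 2) ltac:(lra)) as [d [Hd H]].
  exists d; split; auto. intros t Ht' Hd'. specialize (H t Ht' Hd').
  revert H. unfold Rabs. repeat destruct Rcase_abs; lra.
Qed.

Lemma RInt_pos_prod F G x y t0 : x < y ->
  ex_RInt (fun t => F t * G t) x y ->
  (forall t, x < t < y -> 0 <= F t * G t) ->
  continuous_on_interval F x y -> continuous_on_interval G x y ->
  x <= t0 <= y -> 0 < F t0 -> 0 < G t0 ->
  0 < RInt (fun t => F t * G t) x y.
Proof.
  intros Hxy Hex Hnn HF HG Ht0 HF0 HG0.
  destruct (loc_pos F x y t0 HF Ht0 HF0) as [d1 [Hd1 H1]].
  destruct (loc_pos G x y t0 HG Ht0 HG0) as [d2 [Hd2 H2]].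
  set (d := Rmin d1 d2).
  assert (Hd : 0 < d) by (apply Rmin_pos; auto).
  assert (d <= d1) by apply Rmin_l. assert (d <= d2) by apply Rmin_r.
  set (p := Rmax x (t0 - d/2)). set (q := Rmin y (t0 + d/2)).
  assert (x <= p) by apply Rmax_l. assert (t0 - d/2 <= p) by apply Rmax_r.
  assert (q <= y) by apply Rmin_l. assert (q <= t0 + d/2) by apply Rmin_r.
  assert (p <= t0). { unfold p. apply Rmax_lub; lra. }
  assert (t0 <= q). { unfold q. apply Rmin_glb; lra. }
  assert (Hpq : p < q).
  { unfold p, q. unfold Rmax, Rmin. destruct Rle_dec; destruct Rle_dec; lra. }
  set (e := F t0 / 2 * (G t0 / 2)).
  assert (He : 0 < e) by (unfold e; apply Rmult_lt_0_compat; lra).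
  assert (Hmid : (q - p) * e <= RInt (fun t => F t * G t) p q).
  { replace ((q - p) * e) with (RInt (fun _ => e) p q).
    2:{ rewrite RInt_const. reflexivity. }
    apply RInt_le; [lra| apply ex_RInt_const | apply (exRI_sub_int _ p q x y); try lra; auto |].
    intros t Ht. 
    assert (Rabs (t - t0) < d1) by (apply Rabs_def1; lra).
    assert (Rabs (t - t0) < d2) by (apply Rabs_def1; lra).
    specialize (H1 t ltac:(lra) ltac:(auto)). specialize (H2 t ltac:(lra) ltac:(auto)).
    unfold e. apply Rmult_le_compat; lra. }
  assert (0 <= RInt (fun t => F t * G t) x p).
  { apply RInt_ge_0; [lra| apply (exRI_sub_int _ x p x y); try lra; auto|]. intros; apply Hnn; lra. }
  assert (0 <= RInt (fun t => F t * G t) q y).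
  { apply RInt_ge_0; [lra| apply (exRI_sub_int _ q y x y); try lra; auto|]. intros; apply Hnn; lra. }
  rewrite <- (RI_chasles _ x p y) by (apply (exRI_sub_int _ _ _ x y); try lra; auto).
  rewrite <- (RI_chasles _ p q y) by (apply (exRI_sub_int _ _ _ x y); try lra; auto).
  assert (0 < (q - p) * e) by (apply Rmult_lt_0_compat; lra).
  lra.
Qed.

Lemma dense_pt x y c t d : x < y -> x <= t <= y -> 0 < d ->
  exists t', x < t' < y /\ t' <> c /\ Rabs (t' - t) < d.
Proof.
  intros Hxy Ht Hd.
  set (e := Rmin d ((y - x)/2)).
  assert (0 < e) by (apply Rmin_pos; lra).
  assert (e <= d) by apply Rmin_l. assert (e <= (y-x)/2) by apply Rmin_r.
  destruct (Rlt_dec t ((x+y)/2)).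
  - destruct (Req_dec (t + e/2) c).
    + exists (t + e/4). repeat split; try lra. apply Rabs_def1; lra.
    + exists (t + e/2). repeat split; try lra. apply Rabs_def1; lra.
  - destruct (Req_dec (t - e/2) c).
    + exists (t - e/4). repeat split; try lra. apply Rabs_def1; lra.
    + exists (t - e/2). repeat split; try lra. apply Rabs_def1; lra.
Qed.

Lemma eq_extend f g x y c : x < y ->
  continuous_on_interval (fun t => f t - g t) x y ->
  (forall t, x < t < y -> t <> c -> f t = g t) ->
  forall t, x <= t <= y -> f t = g t.
Proof.
  intros Hxy Hc Heq t Ht. apply NNPP. intro Hne.
  assert (HD : 0 < Rabs (f t - g t)) by (apply Rabs_pos_lt; lra).
  destruct (Hc t Ht _ HD) as [d [Hd H]].
  destruct (dense_pt x y c t d Hxy Ht Hd) as [t' [H1 [H2 H3]]].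
  specialize (H t' ltac:(lra) H3). rewrite (Heq t' H1 H2) in H.
  replace (g t' - g t' - (f t - g t)) with (- (f t - g t)) in H by ring.
  rewrite Rabs_Ropp in H. lra.
Qed.

Lemma crossing (k : R -> R) lo : lo <= 0 -> k 0 >= 0 ->
  (forall u t, lo <= u <= t -> t <= 0 -> k u >= 0 -> k t >= 0) ->
  exists c, lo <= c <= 0 /\ (forall t, lo <= t < c -> k t < 0) /\
            (forall t, c < t <= 0 -> k t >= 0).
Proof.
  intros Hlo H0 Hmon.
  set (E := fun x => exists u, lo <= u <= 0 /\ k u >= 0 /\ x = - u).
  assert (Hb : bound E). { exists (- lo). intros x [u [Hu [_ ->]]]. lra. }
  assert (Hne : exists x, E x). { exists 0. exists 0. repeat split; try lra; auto. }
  destruct (completeness E Hb Hne) as [m [Hub Hleast]].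
  assert (0 <= m) by (apply Hub; exists 0; repeat split; try lra; auto).
  assert (m <= - lo). { apply Hleast. intros x [u [Hu [_ ->]]]. lra. }
  exists (- m). split; [lra|]. split.
  - intros t Ht. apply Rnot_ge_lt. intro Hk.
    assert (- t <= m) by (apply Hub; exists t; repeat split; try lra; auto).
    lra.
  - intros t Ht. destruct (classic (exists u, lo <= u < t /\ k u >= 0)) as [[u [Hu Hku]]|Hno].
    + apply (Hmon u t); auto; lra.
    + exfalso. assert (m <= - t).
      { apply Hleast. intros x [u [Hu [Hku ->]]].
        destruct (Rle_dec t u); [lra|]. exfalso; apply Hno; exists u; split; auto; lra. }
      lra.
Qed.

Lemma exRI_lin4 u v w z x y a1 a2 a3 a4 :
  ex_RInt u x y -> ex_RInt v x y -> ex_RInt w x y -> ex_RInt z x y ->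
  ex_RInt (fun t => a1 * u t + a2 * v t + a3 * w t + a4 * z t) x y.
Proof.
  intros. apply exRI_add; [apply exRI_add; [apply exRI_add|]|]; apply exRI_scal; auto.
Qed.
Lemma RI_lin4 (u v w z : R -> R) x y a1 a2 a3 a4 :
  ex_RInt u x y -> ex_RInt v x y -> ex_RInt w x y -> ex_RInt z x y ->
  RInt (fun t => a1 * u t + a2 * v t + a3 * w t + a4 * z t) x y =
  a1 * RInt u x y + a2 * RInt v x y + a3 * RInt w x y + a4 * RInt z x y.
Proof.
  intros Hu Hv Hw Hz.
  pose proof (exRI_scal u a1 x y Hu) as E1.
  pose proof (exRI_scal v a2 x y Hv) as E2.
  pose proof (exRI_scal w a3 x y Hw) as E3.
  pose proof (exRI_scal z a4 x y Hz) as E4.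
  pose proof (exRI_add _ _ x y E1 E2) as E12.
  pose proof (exRI_add _ _ x y E12 E3) as E123.
  rewrite (RI_add _ _ x y E123 E4).
  rewrite (RI_add _ _ x y E12 E3).
  rewrite (RI_add _ _ x y E1 E2).
  rewrite (RI_scal u a1 x y Hu), (RI_scal v a2 x y Hv), (RI_scal w a3 x y Hw), (RI_scal z a4 x y Hz).
  reflexivity.
Qed.

Lemma ex_poly1 A B m x y : ex_RInt (fun t => (A + B*t)^m) x y.
Proof. apply (ex_RInt_continuous (V:=R_CompleteNormedModule)). intros z _. apply (ex_derive_continuous (fun t => (A+B*t)^m)). auto_derive. auto. Qed.
Lemma ex_poly2 A B m x y : ex_RInt (fun t => t * (A + B*t)^m) x y.
Proof. apply (ex_RInt_continuous (V:=R_CompleteNormedModule)). intros z _. apply (ex_derive_continuous (fun t => t*(A+B*t)^m)). auto_derive. auto. Qed.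
Lemma cont_poly1 A B m x y : continuous_on_interval (fun t => (A + B*t)^m) x y.
Proof. apply cont_global. intros t. apply continuity_pt_filterlim. apply (ex_derive_continuous (fun t => (A+B*t)^m)). auto_derive. auto. Qed.
Lemma cont_lin A B x y : continuous_on_interval (fun t => A + B*t) x y.
Proof. apply cont_global. intros t. apply continuity_pt_filterlim. apply (ex_derive_continuous (fun t => (A+B*t))). auto_derive. auto. Qed.

Lemma ex_RInt_ext_R f g x y : (forall t, f t = g t) -> ex_RInt f x y -> ex_RInt g x y.
Proof. intros H E. apply (ex_RInt_ext f g x y); auto. Qed.
Lemma RInt_ext_R f g x y : (forall t, f t = g t) -> RInt f x y = RInt g x y.
Proof. intros H. apply (RInt_ext f g x y); auto. Qed.
Lemma RInt_ext_R2 f g x y : x <= y -> (forall t, x < t < y -> f t = g t) -> RInt f x y = RInt g x y.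
Proof. intros Hxy H. apply (RInt_ext f g x y). rewrite Rmin_left, Rmax_right by lra. auto. Qed.
Lemma ex_RInt_ext_R2 f g x y : x <= y -> (forall t, x < t < y -> f t = g t) -> ex_RInt f x y -> ex_RInt g x y.
Proof. intros Hxy H E. apply (ex_RInt_ext f g x y); auto. rewrite Rmin_left, Rmax_right by lra. auto. Qed.

Ltac fixeq := match goal with |- @eq _ ?x ?y => change (@eq R x y) end.

Lemma pow_div_R x y k : y <> 0 -> (x/y)^k = x^k/y^k.
Proof. intros; unfold Rdiv; rewrite Rpow_mult_distr, pow_inv; reflexivity. Qed.
Lemma cont_tminus c x y : continuous_on_interval (fun t => t - c) x y.
Proof. apply cont_global. intros t. apply continuity_pt_filterlim. apply (ex_derive_continuous (fun t => t - c)). auto_derive. auto. Qed.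
Lemma cont_cminus c x y : continuous_on_interval (fun t => c - t) x y.
Proof. apply cont_global. intros t. apply continuity_pt_filterlim. apply (ex_derive_continuous (fun t => c - t)). auto_derive. auto. Qed.

Theorem claim4 (n : nat) (a b : R) (f : R -> R)
  (Hn : (2 <= n)%nat) (Ha : 0 < a) (Hb : 0 < b)
  (Hcont : continuous_on_interval f (- a) b)
  (Hnonneg : forall t, - a <= t <= b -> 0 <= f t)
  (Hpos : forall t, - a < t < b -> 0 < f t)
  (Hconc : concave_on (fun t => nonneg_root (n - 1) (f t)) (- a) b)
  (pr_mom : Riemann_integrable (fun t => t * f t) (- a) b)
  (Hbary : RiemannInt pr_mom = 0)
  (pr_pos : Riemann_integrable f 0 b)
  (pr_neg : Riemann_integrable f (- a) 0) :
  RiemannInt pr_pos / RiemannInt pr_neg <= (1 + / INR n) ^ n - 1 /\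
  (RiemannInt pr_pos / RiemannInt pr_neg = (1 + / INR n) ^ n - 1 <->
     (affine_on (fun t => nonneg_root (n - 1) (f t)) (- a) b /\
      nonneg_root (n - 1) (f (- a)) = 0)).
Proof.
  destruct n as [|m]; [lia|].
  assert (Hm : (1 <= m)%nat) by lia.
  replace (S m - 1)%nat with m in * by lia.
  rewrite <- (RInt_Reals _ _ _ pr_pos), <- (RInt_Reals _ _ _ pr_neg).
  pose proof (RInt_Reals _ _ _ pr_mom) as Hm0. rewrite Hbary in Hm0.
  pose proof (ex_RInt_Reals_1 _ _ _ pr_neg) as exneg.
  pose proof (ex_RInt_Reals_1 _ _ _ pr_pos) as expos.
  pose proof (ex_RInt_Reals_1 _ _ _ pr_mom) as exmom.
  clear Hbary pr_mom pr_pos pr_neg.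
  assert (exf : forall x y, -a <= x -> x <= y -> y <= b -> ex_RInt f x y).
  { intros x y H1 H2 H3. apply (exRI_sub_int f x y (-a) b); auto.
    apply (ex_RInt_Chasles f (-a) 0 b); auto. }
  assert (extf : forall x y, -a <= x -> x <= y -> y <= b -> ex_RInt (fun t => t * f t) x y).
  { intros x y H1 H2 H3. apply (exRI_sub_int _ x y (-a) b); auto. }
  assert (Hbar : RInt (fun t => t * f t) (-a) 0 + RInt (fun t => t * f t) 0 b = 0).
  { rewrite RI_chasles; auto; apply extf; lra. }
  clear Hm0.
  set (N := RInt f (-a) 0). set (P := RInt f 0 b).
  set (Mp := RInt (fun t => t * f t) 0 b).
  set (h := fun t => nonneg_root m (f t)) in *.
  assert (Hfh : forall t, -a <= t <= b -> f t = (h t)^m).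
  { intros t Ht. unfold h. rewrite root_pow; auto. }
  assert (hnn : forall t, 0 <= h t) by (intros; apply root_nonneg).
  set (h0 := h 0).
  assert (Hh0 : 0 < h0) by (apply root_pos, Hpos; lra).
  assert (Hnn : 0 < INR (S m)) by (apply lt_0_INR; lia).
  assert (Hchord : forall t, -a <= t <= 0 -> h0 + (h0/a)*t <= h t).
  { intros t Ht. set (q := t / a).
    assert (Htq : t = q * a) by (unfold q; field; lra).
    assert (-1 <= q <= 0) by (split; nra).
    pose proof (Hconc 0 (-a) (1 + q) ltac:(lra) ltac:(lra) ltac:(lra)) as Hc.
    simpl in Hc. replace ((1 + q) * 0 + (1 - (1 + q)) * - a) with t in Hc by lra.
    fold h0 in Hc. pose proof (hnn (-a)).
    replace (h0 / a * t) with (q * h0) by (rewrite Htq; field; lra). nra. }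
  assert (HN : h0^m * a <= INR (S m) * N).
  { assert (Hle : RInt (fun t => (h0 + (h0/a)*t)^m) (-a) 0 <= N).
    { apply RInt_le; [lra| apply ex_poly1 | apply exf; lra |].
      intros t Ht. rewrite Hfh by lra. apply pow_incr. split; [|apply Hchord; lra].
      assert (0 <= h0/a) by (apply Rdiv_le_0_compat; lra).
      replace (h0 + h0/a*t) with (h0/a * (t + a)) by (field; lra). nra. }
    rewrite int_pow_lin in Hle by (apply Rgt_not_eq, Rdiv_lt_0_compat; lra).
    unfold Phi in Hle.
    replace (h0 + h0/a * -a) with 0 in Hle by (field; lra).
    replace (h0 + h0/a * 0) with h0 in Hle by ring.
    rewrite pow_i in Hle by lia. simpl pow in Hle.
    replace (h0 * h0 ^ m / (INR (S m) * (h0 / a)) - 0 / (INR (S m) * (h0 / a)))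
      with (h0 ^ m * a / INR (S m)) in Hle by (field; lra).
    apply (Rmult_le_compat_l (INR (S m))) in Hle; [|lra].
    replace (INR (S m) * (h0 ^ m * a / INR (S m))) with (h0^m * a) in Hle by (field; lra).
    exact Hle. }
  assert (Hh0m : 0 < h0^m) by (apply pow_lt; lra).
  assert (HNpos : 0 < N).
  { assert (0 < h0^m * a) by (apply Rmult_lt_0_compat; lra). nra. }
  set (s := h0^(S m) / (INR (S m) * N)).
  assert (Hs : 0 < s) by (unfold s; apply Rdiv_lt_0_compat; [apply pow_lt; lra| nra]).
  assert (HNs : h0^(S m) / (INR (S m) * s) = N) by (unfold s; field; repeat split; try lra; try (apply pow_nonzero; lra)).
  assert (Hsa : s * a <= h0).
  { assert (E : s * a * (INR (S m) * N) = h0 * (h0^m * a)) by (unfold s; change (h0^(S m)) with (h0 * h0^m); field; repeat split; lra).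
    apply (Rmult_le_reg_r (INR (S m) * N)); [nra|]. rewrite E. apply Rmult_le_compat_l; lra. }
  assert (Hlpos : forall t, -a <= t -> 0 <= h0 + s*t) by (intros; nra).

  destruct (crossing (fun t => h t - (h0 + s*t)) (-a)) as [c [Hc [Hc1 Hc2]]].
  { lra. }
  { unfold h0. rewrite Rmult_0_r. lra. }
  { intros u t Hu Ht Hk.
    destruct (Req_dec u t) as [<-|Hut]; auto.
    assert (Hu0 : u < 0) by lra.
    set (l := t / u).
    assert (Htl : t = l * u) by (unfold l; field; lra).
    assert (0 <= l <= 1) by (split; nra).
    pose proof (Hconc u 0 l ltac:(lra) ltac:(lra) ltac:(lra)) as Hcc.
    simpl in Hcc. replace (l * u + (1 - l) * 0) with t in Hcc by lra.
    fold h0 in Hcc. nra. }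
  assert (Hneg : forall t, -a < t < 0 -> 0 <= (c - t) * ((h0 + s*t)^m - f t)).
  { intros t Ht. destruct (Rtotal_order t c) as [Hlt|[Heq|Hgt]].
    - specialize (Hc1 t ltac:(lra)). rewrite Hfh by lra.
      apply Rmult_le_pos; [lra|]. 
      assert (h t ^ m <= (h0 + s*t)^m) by (apply pow_incr; split; [apply hnn| lra]). lra.
    - subst. rewrite Rminus_eq_0. lra.
    - specialize (Hc2 t ltac:(lra)). rewrite Hfh by lra.
      assert ((h0 + s*t)^m <= h t ^ m) by (apply pow_incr; split; [apply Hlpos; lra| lra]).
      replace ((c - t) * ((h0 + s * t) ^ m - h t ^ m)) with ((t - c) * (h t ^ m - (h0 + s * t) ^ m)) by ring.
      apply Rmult_le_pos; lra. }
  set (I := RInt (fun t => (c - t) * ((h0 + s*t)^m - f t)) (-a) 0).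
  assert (HI0 : 0 <= I).
  { apply RInt_ge_0; [lra| |exact Hneg].
    apply (ex_RInt_ext_R (fun t => c * (h0 + s*t)^m + (-c) * f t + (-1) * (t*(h0+s*t)^m) + 1 * (t * f t))).
    { intros; ring. }
    apply exRI_lin4; [apply ex_poly1| apply exf; lra | apply ex_poly2 | apply extf; lra]. }
  assert (HIe : I = c * (Phi h0 s m 0 - Phi h0 s m (-a)) - c * N - (Psi h0 s m 0 - Psi h0 s m (-a))
                    + RInt (fun t => t * f t) (-a) 0).
  { unfold I.
    rewrite (RInt_ext_R _ (fun t => c * (h0 + s*t)^m + (-c) * f t + (-1) * (t*(h0+s*t)^m) + 1 * (t * f t)))
      by (intros; ring).
    rewrite (RI_lin4 _ _ _ _ _ _ _ _ _ _ (ex_poly1 h0 s m (-a) 0) (exf (-a) 0 ltac:(lra) ltac:(lra) ltac:(lra))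
       (ex_poly2 h0 s m (-a) 0) (extf (-a) 0 ltac:(lra) ltac:(lra) ltac:(lra))).
    rewrite int_pow_lin, int_t_pow_lin by lra. fold N. fixeq; ring. }
  set (Mn := - RInt (fun t => t * f t) (-a) 0).
  set (mcn := h0^(S (S m)) / (INR (S m) * INR (S (S m)) * s^2)).
  set (la := h0 + s * (-a)).
  assert (Hla : 0 <= la) by (unfold la; nra).
  assert (Hnn2 : 0 < INR (S (S m))) by (apply lt_0_INR; lia).
  set (X := (c + a) * (la^(S m) / (INR (S m) * s))).
  set (Y := la^(S (S m)) / (INR (S m) * INR (S (S m)) * s^2)).
  assert (HX : 0 <= X).
  { unfold X. apply Rmult_le_pos; [lra|]. apply Rdiv_le_0_compat; [apply pow_le; lra| nra]. }
  assert (HY : 0 <= Y).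
  { unfold Y. apply Rdiv_le_0_compat; [apply pow_le; lra|]. 
    apply Rmult_lt_0_compat; [nra| apply pow_lt; lra]. }
  assert (HIe2 : I = mcn - Mn - X - Y).
  { rewrite HIe. unfold Phi, Psi, mcn, Mn, X, Y, la.
    replace (h0 + s*0) with h0 by ring.
    replace (h0 ^ S m / (INR (S m) * s)) with N by (rewrite <- HNs; reflexivity).
    fixeq. field. repeat split; lra. }

  assert (Hcf : continuous_on_interval f (-a) 0) by (apply (cont_sub f (-a) b); auto; lra).
  assert (HleP : forall t, 0 <= t <= b -> h t <= h0 + s*t).
  { intros t1 Ht1. apply Rnot_lt_le. intro Hgt.
    assert (Ht1p : 0 < t1).
    { destruct (Req_dec t1 0) as [->|]; [|lra]. fold h0 in Hgt. lra. }
    assert (Hstrict : forall u, -a <= u < 0 -> h u < h0 + s*u).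
    { intros u Hu. set (l := t1 / (t1 - u)).
      assert (Hl1 : l * (t1 - u) = t1) by (unfold l; field; lra).
      assert (0 < l < 1) by (split; nra).
      pose proof (Hconc u t1 l ltac:(lra) ltac:(lra) ltac:(lra)) as Hcc.
      simpl in Hcc. replace (l * u + (1 - l) * t1) with 0 in Hcc by nra.
      fold h0 in Hcc. nra. }
    assert (Hpos2 : 0 < RInt (fun t => 1 * ((h0 + s*t)^m - f t)) (-a) 0).
    { apply (RInt_pos_prod (fun _ => 1) (fun t => (h0 + s*t)^m - f t) (-a) 0 (-a/2)); try lra.
      - apply (ex_RInt_ext_R (fun t => 1 * (h0 + s*t)^m + (-1) * f t + 0 * (t * f t) + 0 * (t * f t))).
        { intros; ring. }
        apply exRI_lin4; [apply ex_poly1| apply exf; lra | apply extf; lra | apply extf; lra].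
      - intros t Ht. rewrite Hfh by lra.
        assert (h t ^ m <= (h0 + s*t)^m) by (apply pow_incr; split; [apply hnn| left; apply Hstrict; lra]).
        lra.
      - apply cont_global. intros; apply continuity_pt_const. intros u v; reflexivity.
      - apply cont_minus; [apply cont_poly1| exact Hcf].
      - rewrite Hfh by lra. 
        pose proof (pow_lt_strict (h (-a/2)) (h0 + s*(-a/2)) m Hm ltac:(split; [apply hnn| apply Hstrict; lra])).
        lra. }
    assert (E : RInt (fun t => 1 * ((h0 + s*t)^m - f t)) (-a) 0 = (Phi h0 s m 0 - Phi h0 s m (-a)) - N).
    { rewrite (RInt_ext_R _ (fun t => 1 * (h0 + s*t)^m + (-1) * f t + 0 * (t * f t) + 0 * (t * f t)))
        by (intros; ring).
      rewrite (RI_lin4 _ _ _ _ _ _ _ _ _ _ (ex_poly1 h0 s m (-a) 0) (exf (-a) 0 ltac:(lra) ltac:(lra) ltac:(lra))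
       (extf (-a) 0 ltac:(lra) ltac:(lra) ltac:(lra)) (extf (-a) 0 ltac:(lra) ltac:(lra) ltac:(lra))).
      rewrite int_pow_lin by lra. fold N. fixeq; ring. }
    rewrite E in Hpos2.
    assert (Phi h0 s m 0 = N) by (unfold Phi; rewrite Rmult_0_r, Rplus_0_r; exact HNs).
    assert (0 <= Phi h0 s m (-a)).
    { unfold Phi. apply Rdiv_le_0_compat; [apply pow_le; fold la; lra| nra]. }
    lra. }
  assert (HfleP : forall t, 0 <= t <= b -> f t <= (h0 + s*t)^m).
  { intros t Ht. rewrite Hfh by lra. apply pow_incr. split; [apply hnn| apply HleP; lra]. }

  assert (HPhi0 : Phi h0 s m 0 = N) by (unfold Phi; rewrite Rmult_0_r, Rplus_0_r; exact HNs).
  assert (HP0 : 0 <= P) by (apply RInt_ge_0; [lra| exact expos| intros; apply Hnonneg; lra]).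
  assert (HPle : P <= Phi h0 s m b - N).
  { rewrite <- HPhi0, <- int_pow_lin by lra. apply RInt_le; [lra| exact expos| apply ex_poly1|].
    intros; apply HfleP; lra. }
  set (X0 := h0^(S m) + INR (S m) * s * P).
  assert (HX0 : 0 < X0).
  { unfold X0. pose proof (pow_lt h0 (S m) Hh0). assert (0 <= INR (S m) * s * P) by (apply Rmult_le_pos; [nra|lra]). lra. }
  set (u := nonneg_root (S m) X0).
  assert (Hu : u^(S m) = X0) by (apply root_pow; [lia| lra]).
  assert (Hu0 : 0 <= u) by apply root_nonneg.
  assert (Hu1 : h0 <= u).
  { apply Rnot_lt_le. intro Hlt. pose proof (pow_lt_strict u h0 (S m) ltac:(lia) (conj Hu0 Hlt)).
    assert (0 <= INR (S m) * s * P) by (apply Rmult_le_pos; nra). unfold X0 in Hu. lra. }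
  assert (Hu2 : u <= h0 + s*b).
  { apply Rnot_lt_le. intro Hlt.
    assert (0 <= s*b) by (apply Rmult_le_pos; lra). assert (Hlb0 : 0 <= h0 + s*b) by lra.
    pose proof (pow_lt_strict (h0 + s*b) u (S m) ltac:(lia) (conj Hlb0 Hlt)).
    unfold Phi in HPle. rewrite <- HNs in HPle.
    assert (INR (S m) * s * P <= (h0 + s*b)^(S m) - h0^(S m)).
    { apply (Rmult_le_compat_l (INR (S m) * s)) in HPle; [|nra].
      replace (INR (S m) * s * ((h0 + s * b) ^ S m / (INR (S m) * s) - h0 ^ S m / (INR (S m) * s)))
        with ((h0 + s*b)^(S m) - h0^(S m)) in HPle by (field; lra). lra. }
    unfold X0 in Hu. lra. }
  set (beta := (u - h0) / s).
  assert (Hlb : h0 + s * beta = u) by (unfold beta; field; lra).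
  assert (Hbe0 : 0 <= beta) by (unfold beta; apply Rdiv_le_0_compat; lra).
  assert (Hbeb : beta <= b) by (unfold beta; apply (Rmult_le_reg_r s); [lra|]; field_simplify; [nra| lra]).
  assert (HPu : P = Phi h0 s m beta - N).
  { unfold Phi. rewrite Hlb, Hu. rewrite <- HNs. unfold X0. fixeq.
    assert (G : forall PP:R, PP = (h0^(S m) + INR (S m)*s*PP)/(INR (S m)*s) - h0^(S m)/(INR (S m)*s)) by (intros; field; lra).
    apply G. }
  set (J1 := RInt (fun t => (t - beta) * (f t - (h0 + s*t)^m)) 0 beta).
  set (J2 := RInt (fun t => (t - beta) * f t) beta b).
  assert (exJ1 : ex_RInt (fun t => (t - beta) * (f t - (h0 + s*t)^m)) 0 beta).
  { apply (ex_RInt_ext_R (fun t => 1 * (t * f t) + (-beta) * f t + (-1) * (t * (h0 + s*t)^m) + beta * (h0 + s*t)^m)).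
    { intros; ring. }
    apply exRI_lin4; [apply extf; lra| apply exf; lra| apply ex_poly2| apply ex_poly1]. }
  assert (exJ2 : ex_RInt (fun t => (t - beta) * f t) beta b).
  { apply (ex_RInt_ext_R (fun t => 1 * (t * f t) + (-beta) * f t + 0 * f t + 0 * f t)).
    { intros; ring. }
    apply exRI_lin4; [apply extf; lra| apply exf; lra| apply exf; lra| apply exf; lra]. }
  assert (HJ1 : 0 <= J1).
  { apply RInt_ge_0; [lra| exact exJ1|]. intros t Ht.
    assert (f t <= (h0 + s*t)^m) by (apply HfleP; lra).
    replace ((t - beta) * (f t - (h0 + s * t) ^ m)) with ((beta - t) * ((h0 + s * t) ^ m - f t)) by ring.
    apply Rmult_le_pos; lra. }
  assert (HJ2 : 0 <= J2).
  { apply RInt_ge_0; [lra| exact exJ2|]. intros t Ht.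
    apply Rmult_le_pos; [lra| apply Hnonneg; lra]. }
  set (mcp := Psi h0 s m beta - Psi h0 s m 0).
  assert (HJ : J1 + J2 = Mp - mcp).
  { unfold J1, J2.
    rewrite (RInt_ext_R _ (fun t => 1 * (t * f t) + (-beta) * f t + (-1) * (t * (h0 + s*t)^m) + beta * (h0 + s*t)^m))
      by (intros; ring).
    rewrite (RInt_ext_R (fun t => (t - beta) * f t) (fun t => 1 * (t * f t) + (-beta) * f t + 0 * f t + 0 * f t))
      by (intros; ring).
    rewrite (RI_lin4 _ _ _ _ _ _ _ _ _ _ (extf 0 beta ltac:(lra) ltac:(lra) ltac:(lra)) (exf 0 beta ltac:(lra) ltac:(lra) ltac:(lra))
       (ex_poly2 h0 s m 0 beta) (ex_poly1 h0 s m 0 beta)).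
    rewrite (RI_lin4 _ _ _ _ _ _ _ _ _ _ (extf beta b ltac:(lra) ltac:(lra) ltac:(lra)) (exf beta b ltac:(lra) ltac:(lra) ltac:(lra))
       (exf beta b ltac:(lra) ltac:(lra) ltac:(lra)) (exf beta b ltac:(lra) ltac:(lra) ltac:(lra))).
    rewrite int_pow_lin, int_t_pow_lin by lra.
    unfold Mp. rewrite <- (RI_chasles (fun t => t * f t) 0 beta b) by (apply extf; lra).
    assert (Hf2 : RInt f 0 beta + RInt f beta b = P) by (unfold P; apply RI_chasles; apply exf; lra).
    rewrite HPhi0. unfold mcp. fixeq.
    assert (E : RInt f 0 beta = P - RInt f beta b) by lra. rewrite E, HPu. ring. }
  assert (HMpn : Mp = Mn) by (unfold Mn, Mp; fixeq; lra).
  assert (Hkey : mcn - mcp = u^(S m) * ((INR (S m) + 1) * h0 - INR (S m) * u) / (INR (S m) * INR (S (S m)) * s^2)).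
  { unfold mcp, mcn, Psi. rewrite Hlb. replace (h0 + s*0) with h0 by ring.
    replace beta with ((u - h0)/s) by reflexivity. rewrite (S_INR (S m)). 
    change (u ^ S (S m)) with (u * u ^ S m). change (h0 ^ S (S m)) with (h0 * h0 ^ S m).
    field. repeat split; lra. }

  assert (HIe3 : I = mcn - Mn - X - Y :> R) by exact HIe2.
  assert (HMpn2 : Mp = Mn :> R) by exact HMpn.
  assert (HuSm : 0 < u^(S m)) by (apply pow_lt; lra).
  assert (HD : 0 < INR (S m) * INR (S (S m)) * s^2) by (apply Rmult_lt_0_compat; [nra| apply pow_lt; lra]).
  assert (Hineq : INR (S m) * u <= (INR (S m) + 1) * h0).
  { assert (Hd : 0 <= mcn - mcp) by lra.
    rewrite Hkey in Hd. set (K := u^(S m) / (INR (S m) * INR (S (S m)) * s^2)).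
    assert (HK : 0 < K) by (unfold K; apply Rdiv_lt_0_compat; lra).
    assert (E : u ^ S m * ((INR (S m) + 1) * h0 - INR (S m) * u) / (INR (S m) * INR (S (S m)) * s ^ 2)
                = K * ((INR (S m) + 1) * h0 - INR (S m) * u)) by (unfold K; field; lra).
    rewrite E in Hd. nra. }
  assert (HR : P / N = (u/h0)^(S m) - 1).
  { assert (HP2 : P = (u^(S m) - h0^(S m)) / (INR (S m) * s) :> R).
    { rewrite HPu. unfold Phi. rewrite Hlb. rewrite <- HNs. field. lra. }
    assert (HN2 : N = h0^(S m) / (INR (S m) * s) :> R) by (rewrite HNs; reflexivity).
    change (@eq R (P / N) ((u/h0)^(S m) - 1)).
    rewrite HP2, HN2, pow_div_R by lra. field. split; [apply pow_nonzero; lra| lra]. }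
  assert (Hq : u / h0 <= 1 + / INR (S m)).
  { assert (E : 1 + / INR (S m) - u/h0 = ((INR (S m)+1)*h0 - INR (S m)*u) / (INR (S m) * h0)) by (field; lra).
    assert (0 <= ((INR (S m)+1)*h0 - INR (S m)*u) / (INR (S m) * h0)) by (apply Rdiv_le_0_compat; nra). lra. }
  assert (Hq0 : 0 <= u/h0) by (apply Rdiv_le_0_compat; lra).
  split.
  { rewrite HR. pose proof (pow_incr _ _ (S m) (conj Hq0 Hq)). lra. }
  split.
  - intro Heq. rewrite HR in Heq.
    assert (Hq1 : u/h0 = 1 + / INR (S m)).
    { apply (pow_inj_nonneg _ _ (S m)); [lia| lra| | lra].
      assert (0 < / INR (S m)) by (apply Rinv_0_lt_compat; lra). lra. }
    assert (Hequ : INR (S m) * u = (INR (S m) + 1) * h0).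
    { assert (Hu' : u = h0 * (u / h0)) by (field; lra). rewrite Hq1 in Hu'. rewrite Hu'. field. lra. }
    assert (Hmc : mcn - mcp = 0).
    { rewrite Hkey. replace ((INR (S m) + 1) * h0 - INR (S m) * u) with 0 by lra. unfold Rdiv. ring. }
    assert (HY0 : Y = 0) by lra.
    assert (HI00 : I = 0 :> R) by lra.
    assert (HJ10 : J1 = 0 :> R) by lra.
    assert (HJ20 : J2 = 0 :> R) by lra.
    assert (Hla0 : la = 0).
    { assert (E : la^(S (S m)) = 0).
      { assert (E2 : la^(S (S m)) = Y * (INR (S m) * INR (S (S m)) * s^2)) by (unfold Y; field; lra).
        rewrite E2, HY0. ring. }
      apply (pow_inj_nonneg _ _ (S (S m))); [lia| lra| lra|]. rewrite E, pow_i by lia. reflexivity. }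
    assert (Hbb : beta = b).
    { destruct (Req_dec beta b) as [|Hne]; auto. exfalso.
      assert (0 < J2).
      { apply (RInt_pos_prod (fun t => t - beta) f beta b ((beta + b)/2)); try lra; auto.
        - intros t Ht. apply Rmult_le_pos; [lra| apply Hnonneg; lra].
        - apply cont_tminus.
        - apply (cont_sub f (-a) b); auto; lra.
        - apply Hpos; lra. }
      lra. }
    assert (HfeqP : forall t, 0 <= t <= b -> f t = (h0 + s*t)^m).
    { apply (eq_extend f (fun t => (h0 + s*t)^m) 0 b 0); auto.
      { apply cont_minus; [apply (cont_sub f (-a) b); auto; lra| apply cont_poly1]. }
      intros t Ht _. apply NNPP. intro Hne.
      assert (Hlt : f t < (h0 + s*t)^m) by (pose proof (HfleP t ltac:(lra)); lra).
      assert (0 < RInt (fun t => (b - t) * ((h0 + s*t)^m - f t)) 0 b).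
      { apply (RInt_pos_prod (fun t => b - t) (fun t => (h0 + s*t)^m - f t) 0 b t); try lra.
        - apply (ex_RInt_ext_R (fun t => (t - beta) * (f t - (h0 + s*t)^m))); [intros; rewrite Hbb; ring|].
          rewrite <- Hbb. exact exJ1.
        - intros x Hx. apply Rmult_le_pos; [lra|]. pose proof (HfleP x ltac:(lra)). lra.
        - apply cont_cminus.
        - apply cont_minus; [apply cont_poly1| apply (cont_sub f (-a) b); auto; lra]. }
      assert (E : J1 = RInt (fun t => (b - t) * ((h0 + s*t)^m - f t)) 0 b).
      { unfold J1. rewrite Hbb. apply RInt_ext_R. intros; ring. }
      lra. }
    assert (exI : ex_RInt (fun t => (c - t) * ((h0 + s*t)^m - f t)) (-a) 0).
    { apply (ex_RInt_ext_R (fun t => c * (h0 + s*t)^m + (-c) * f t + (-1) * (t*(h0+s*t)^m) + 1 * (t * f t))).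
      { intros; ring. }
      apply exRI_lin4; [apply ex_poly1| apply exf; lra | apply ex_poly2 | apply extf; lra]. }
    assert (HfeqN : forall t, -a <= t <= 0 -> f t = (h0 + s*t)^m).
    { apply (eq_extend f (fun t => (h0 + s*t)^m) (-a) 0 c); try lra.
      { apply cont_minus; [exact Hcf| apply cont_poly1]. }
      intros t Ht Htc. apply NNPP. intro Hne.
      pose proof (Hneg t Ht) as Hn0.
      destruct (Rlt_dec t c) as [Hlt|Hge].
      - assert (0 < I).
        { apply (RInt_pos_prod (fun t => c - t) (fun t => (h0 + s*t)^m - f t) (-a) 0 t); try lra; auto.
          - apply cont_cminus.
          - apply cont_minus; [apply cont_poly1| exact Hcf].
          - assert (0 <= (h0 + s*t)^m - f t).
            { apply (Rmult_le_reg_l (c - t)); lra. }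
            lra. }
        lra.
      - assert (Hgt : c < t) by lra.
        assert (0 < RInt (fun t => (t - c) * (f t - (h0 + s*t)^m)) (-a) 0).
        { apply (RInt_pos_prod (fun t => t - c) (fun t => f t - (h0 + s*t)^m) (-a) 0 t); try lra; auto.
          - apply (ex_RInt_ext_R (fun t => (c - t) * ((h0 + s*t)^m - f t))); [intros; ring| exact exI].
          - intros x Hx. pose proof (Hneg x Hx). nra.
          - apply cont_tminus.
          - apply cont_minus; [exact Hcf| apply cont_poly1].
          - assert (0 <= f t - (h0 + s*t)^m).
            { apply (Rmult_le_reg_l (t - c)); nra. }
            lra. }
        assert (E : I = RInt (fun t => (t - c) * (f t - (h0 + s*t)^m)) (-a) 0).
        { unfold I. apply RInt_ext_R. intros; ring. }
        lra. }
    split.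
    + exists s, h0. intros t Ht.
      assert (Hft : f t = (h0 + s*t)^m).
      { destruct (Rle_dec t 0); [apply HfeqN| apply HfeqP]; lra. }
      unfold h. rewrite Hft, root_of_pow by (auto; apply Hlpos; lra). ring.
    + unfold h. rewrite (HfeqN (-a)) by lra. rewrite root_of_pow by (auto; lra).
      fold la. exact Hla0.
  - intros [[c0 [d0 Haff]] Hha].
    pose proof (Haff (-a) ltac:(lra)) as Ea. pose proof (Haff 0 ltac:(lra)) as E0.
    assert (Hd0 : d0 = h0) by (unfold h0; rewrite E0; ring).
    assert (Hc0a : c0 * a = h0) by (unfold h in Hha; unfold h in Ea; rewrite Hha in Ea; lra).
    assert (Hc0 : 0 < c0) by nra.
    assert (Hf2 : forall t, -a <= t <= b -> f t = (h0 + c0*t)^m).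
    { intros t Ht. rewrite Hfh by lra. rewrite (Haff t Ht). f_equal. lra. }
    assert (Hmom : RInt (fun t => t * f t) (-a) b = 0 :> R).
    { rewrite <- (RI_chasles _ (-a) 0 b) by (apply extf; lra). exact Hbar. }
    rewrite (RInt_ext_R2 _ (fun t => t * (h0 + c0*t)^m)) in Hmom by (try lra; intros; rewrite Hf2 by lra; reflexivity).
    rewrite int_t_pow_lin in Hmom by lra.
    assert (Hpsa : Psi h0 c0 m (-a) = 0).
    { unfold Psi. replace (h0 + c0 * -a) with 0 by lra. rewrite !pow_i by lia. field. lra. }
    set (L := h0 + c0*b). assert (HL : 0 < L) by (unfold L; nra).
    assert (HLm : 0 < L^(S m)) by (apply pow_lt; lra).
    assert (E : Psi h0 c0 m b = (L^(S m) / (INR (S m) * INR (S (S m)) * c0^2)) * (b * INR (S (S m)) * c0 - L)).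
    { unfold Psi. fold L. change (L^(S (S m))) with (L * L^(S m)). field. lra. }
    rewrite E, Hpsa in Hmom.
    assert (HK : 0 < L^(S m) / (INR (S m) * INR (S (S m)) * c0^2)).
    { apply Rdiv_lt_0_compat; auto. apply Rmult_lt_0_compat; [nra| apply pow_lt; lra]. }
    assert (Hz : b * INR (S (S m)) * c0 - L = 0).
    { destruct (Rmult_integral _ _ (eq_trans (eq_sym (Rminus_0_r _)) Hmom)); [lra| auto]. }
    rewrite S_INR in Hz.
    assert (Hab : INR (S m) * b = a).
    { unfold L in Hz. rewrite <- Hc0a in Hz.
      apply (Rmult_eq_reg_l c0); [|lra]. lra. }
    assert (HN3 : N = Phi h0 c0 m 0 - Phi h0 c0 m (-a) :> R).
    { unfold N. rewrite (RInt_ext_R2 _ (fun t => (h0 + c0*t)^m)) by (try lra; intros; rewrite Hf2 by lra; reflexivity).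
      apply int_pow_lin; lra. }
    assert (HP3 : P = Phi h0 c0 m b - Phi h0 c0 m 0 :> R).
    { unfold P. rewrite (RInt_ext_R2 _ (fun t => (h0 + c0*t)^m)) by (try lra; intros; rewrite Hf2 by lra; reflexivity).
      apply int_pow_lin; lra. }
    assert (Hpa : Phi h0 c0 m (-a) = 0).
    { unfold Phi. replace (h0 + c0 * -a) with 0 by lra. rewrite pow_i by lia. field. lra. }
    assert (Hq5 : 1 + / INR (S m) = L / h0).
    { unfold L. rewrite <- Hc0a, <- Hab. field. lra. }
    change (@eq R (P / N) ((1 + / INR (S m)) ^ S m - 1)).
    rewrite Hq5, pow_div_R by lra. rewrite HP3, HN3, Hpa. unfold Phi. fold L.
    replace (h0 + c0 * 0) with h0 by ring. field.
    repeat split; try lra; apply pow_nonzero; lra.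
Qed.
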